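(* Let $(X,d_X)$, $(Y,d_Y)$ be metric spaces with $Y$ separable, and let $\xi$ be a nonzero countable ordinal. A function $f: X\to Y$ is of Baire class $\xi$ if and only if it is the uniform limit of a sequence of $\mathbf{\Delta}^0_{\xi+1}$-functions from $X$ to $Y$.
   Context: Work in ZF plus countable choice over the reals. For metrizable $X,Y$: $f:X\to Y$ is of Baire class $1$ if $f^{-1}(U)\in\mathbf{\Sigma}^0_2(X)$ for every open $U\subseteq Y$; for $1<\xi<\omega_1$, $f$ is of Baire class $\xi$ if it is the pointwise limit of a sequence of functions $f_n:X\to Y$ where each $f_n$ is of Baire class $\xi_n$ for some $1\le\xi_n<\xi$. For a nonzero countable ordinal $\eta$, $f:X\to Y$ is a $\mathbf{\Delta}^0_\eta$-function if $f^{-1}(A)\in\mathbf{\Sigma}^0_\eta(X)$ for every $A\in\mathbf{\Sigma}^0_\eta(Y)$. *)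

(* Defs.v *)
From HB Require Import structures.
From mathcomp Require Import all_boot all_order all_algebra.
From mathcomp Require Import all_classical all_reals all_analysis.
Set Implicit Arguments. Unset Strict Implicit. Unset Printing Implicit Defensive.
Import Order.TTheory GRing.Theory Num.Theory.
Local Open Scope classical_set_scope.
Local Open Scope ring_scope.

(* Every countable ordinal is the value of some tree:
   |OZ| = 0, |OS t| = |t|+1, |OL f| = sup_n |f n|.              *)
Inductive cord : Type :=
| OZ : cord
| OS : cord -> cord
| OL : (nat -> cord) -> cord.

(* ole s t  <->  |s| <= |t|  (standard order on Brouwer trees) *)
Inductive ole : cord -> cord -> Prop :=
| ole_Z t : ole OZ t
| ole_SS s t : ole s t -> ole (OS s) (OS t)
| ole_cocone s (f : nat -> cord) k : ole s (f k) -> ole s (OL f)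
| ole_limiting (f : nat -> cord) t : (forall k, ole (f k) t) -> ole (OL f) t.

Definition olt (s t : cord) : Prop := ole (OS s) t.
Definition oeq (s t : cord) : Prop := ole s t /\ ole t s.

Definition oone : cord := OS OZ.

Inductive Sigma0 (T : topologicalType) : cord -> set T -> Prop :=
| Sigma0_open t (A : set T) : oeq t oone -> open A -> Sigma0 t A
| Sigma0_union t (A : set T) (B : nat -> set T) :
    olt oone t ->
    (forall n, exists s, ole oone s /\ olt s t /\ Sigma0 s (~` B n)) ->
    A = \bigcup_n B n -> Sigma0 t A.

Definition Delta0_fun (X Y : topologicalType) (eta : cord) (f : X -> Y) : Prop :=
  forall A : set Y, Sigma0 eta A -> Sigma0 eta (f @^-1` A).

Inductive BaireClass (X Y : topologicalType) : cord -> (X -> Y) -> Prop :=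
| Baire_one t (f : X -> Y) : oeq t oone ->
    (forall U : set Y, open U -> Sigma0 (OS oone) (f @^-1` U)) -> BaireClass t f
| Baire_lim t (f : X -> Y) (g : nat -> X -> Y) :
    olt oone t ->
    (forall n, exists s, ole oone s /\ olt s t /\ BaireClass s (g n)) ->
    (forall x, (fun n => g n x) @ \oo --> f x) -> BaireClass t f.

Definition separable_space (T : topologicalType) : Prop :=
  exists D : set T, countable D /\ dense D.

Definition unif_limit (R : realType) (X : Type) (Y : metricType R)
  (F : nat -> X -> Y) (f : X -> Y) : Prop :=
  forall e : R, 0 < e -> exists N : nat, forall n, (N <= n)%N ->
    forall x, mdist (f x) (F n x) < e.

(* Main.v *)
Require Import Defs.
From HB Require Import structures.
From mathcomp Require Import all_boot all_order all_algebra.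
From mathcomp Require Import all_classical all_reals all_analysis.
From mathcomp Require Import ring lra.
From Stdlib Require Import Lia.
Set Implicit Arguments. Unset Strict Implicit. Unset Printing Implicit Defensive.
Import Order.TTheory GRing.Theory Num.Theory.
Local Open Scope classical_set_scope.
Local Open Scope ring_scope.

Lemma ole_refl t : ole t t.
Proof.
elim: t => [|t IH|f IH]; first exact: ole_Z.
  exact: ole_SS.
apply: ole_limiting => k; exact: (ole_cocone (k:=k)).
Qed.

Lemma ole_OL_inv g c : ole (OL g) c -> forall j, ole (g j) c.
Proof.
move=> H; remember (OL g) as a eqn:Ea; induction H as [t|s t H IH|s f k H IH|f t H IH]; try discriminate.
- move=> j; apply: (ole_cocone (k:=k)); exact: IH.
- case: Ea => <- j; exact: H.
Qed.

Lemma ole_SS_inv s t : ole (OS s) (OS t) -> ole s t.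
Proof. by move=> H; inversion H. Qed.

Lemma ole_SL_inv s f : ole (OS s) (OL f) -> exists k, ole (OS s) (f k).
Proof. by move=> H; inversion H; exists k. Qed.

Lemma ole_SZ_inv s : ~ ole (OS s) OZ.
Proof. by move=> H; inversion H. Qed.

Lemma ole_trans a b c : ole a b -> ole b c -> ole a c.
Proof.
move=> H; elim: H c.
- move=> t c _; exact: ole_Z.
- move=> s t H IH c; elim: c => [|c _|f IHf] Hc.
  + by case: (ole_SZ_inv Hc).
  + apply: ole_SS; apply: IH; exact: ole_SS_inv.
  + have [k Hk] := ole_SL_inv Hc; apply: (ole_cocone (k:=k)); exact: IHf.
- move=> s f k H IH c Hc; apply: IH; exact: ole_OL_inv Hc k.
- move=> f t H IH c Hc; apply: ole_limiting => k; exact: IH.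
Qed.

Lemma ole_S t : ole t (OS t).
Proof.
elim: t => [|t IH|f IH]; first exact: ole_Z.
  exact: ole_SS.
apply: ole_limiting => k; apply: ole_trans (IH k) _; apply: ole_SS.
exact: (ole_cocone (k:=k) (ole_refl _)).
Qed.

Lemma olt_ole s t : olt s t -> ole s t.
Proof. move=> H; exact: ole_trans (ole_S s) H. Qed.

Lemma olt_ole_trans a b c : olt a b -> ole b c -> olt a c.
Proof. exact: ole_trans. Qed.

Lemma ole_olt_trans a b c : ole a b -> olt b c -> olt a c.
Proof. move=> H; apply: ole_trans; exact: ole_SS. Qed.

Lemma olt_trans a b c : olt a b -> olt b c -> olt a c.
Proof. move=> H1 H2; apply: olt_ole_trans H1 (olt_ole H2). Qed.

Lemma ole_total s t : ole s t \/ olt t s.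
Proof.
elim: s t => [|s IHs|h IHh] t.
- left; exact: ole_Z.
- elim: t => [|t _|f IHf].
  + right; apply: ole_SS; exact: ole_Z.
  + case: (IHs t) => H; [left; exact: ole_SS | right; exact: ole_SS].
  + case: (EM (exists k, ole (OS s) (f k))) => [[k Hk]|Hn].
      left; exact: (ole_cocone (k:=k)).
    right; apply: ole_SS; apply: ole_limiting => k.
    case: (IHf k) => H; first by exfalso; apply: Hn; exists k.
    exact: ole_SS_inv.
- case: (EM (forall k, ole (h k) t)) => [H|Hn].
    left; exact: ole_limiting.
  have [k Hk] : exists k, ~ ole (h k) t.
    by apply: contra_notP Hn => H k; apply: contra_notP H => Hk; exists k.
  right; case: (IHh k t) => H; first by exfalso.
  exact: (ole_cocone (k:=k)).
Qed.

Lemma olt_irr t : ~ olt t t.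
Proof.
elim: t => [|t IH|f IH] H.
- exact: ole_SZ_inv H.
- exact: IH (ole_SS_inv H).
- have [k Hk] := ole_SL_inv H; apply: (IH k).
  apply: ole_trans _ Hk; apply: ole_SS; exact: (ole_cocone (k:=k) (ole_refl _)).
Qed.

Lemma olt_ole_false s t : olt s t -> ole t s -> False.
Proof. move=> H1 H2; apply: (@olt_irr s); exact: olt_ole_trans H1 H2. Qed.

Lemma one_case t : ole oone t -> oeq t oone \/ olt oone t.
Proof.
move=> H; case: (ole_total t oone) => H2; [left; by split | by right].
Qed.

Lemma olt_wf : well_founded olt.
Proof.
have Q : forall t s, olt s t -> Acc olt s.
  elim => [|t IH|f IH] s H.
  - by case: (ole_SZ_inv H).
  - constructor => u Hu; apply: IH; apply: olt_ole_trans Hu (ole_SS_inv H).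
  - have [k Hk] := ole_SL_inv H; exact: IH Hk.
move=> t; constructor => u; exact: Q.
Qed.

Section MetricOpen.
Context {R : realType} {T : metricType R}.

Lemma open_mdistP (A : set T) :
  open A <-> forall x, A x -> exists2 e : R, 0 < e & forall y, mdist x y < e -> A y.
Proof.
rewrite openE; split.
- move=> H x Ax; have := H x Ax; rewrite /interior => /nbhs_ballP [e e0 He].
  exists e => // y xy; apply: He; rewrite ballEmdist; exact: xy.
- move=> H x Ax; rewrite /interior; apply/nbhs_ballP.
  have [e e0 He] := H x Ax; exists e => // y; rewrite ballEmdist; exact: He.
Qed.

Lemma mdist_tri (x y z : T) : mdist x z <= mdist x y + mdist y z.
Proof. exact: metric_triangle. Qed.

Lemma mdist_sym' (x y : T) : mdist x y = mdist y x.
Proof. exact: metric_sym. Qed.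

Lemma inv_small (e : R) : 0 < e -> exists k : nat, k.+1%:R^-1 < e.
Proof. by move=> e0; have [k] := ltr_add_invr e0; rewrite add0r; exists k. Qed.

Definition inner (A : set T) (r : R) : set T := [set y | forall z, mdist y z < r -> A z].

Lemma inner_Copen A r : open (~` inner A r).
Proof.
apply/open_mdistP => y /= /existsNP [z /not_implyP [yz nAz]].
exists (r - mdist y z); first by rewrite subr_gt0.
move=> y' yy' H; apply: nAz; apply: H.
rewrite (le_lt_trans (mdist_tri y' y z)) //.
by rewrite -ltrBrDr mdist_sym'.
Qed.

Lemma open_bigcup_inner A : open A -> A = \bigcup_k inner A k.+1%:R^-1.
Proof.
move=> oA; apply/seteqP; split.
- move=> x Ax; have [e e0 He] := (proj1 (open_mdistP A)) oA x Ax.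
  have [k Hk] := inv_small e0; exists k => // z xz; apply: He.
  exact: lt_trans xz Hk.
- move=> x [k _ Hk]; apply: Hk; by rewrite mdistxx invr_gt0 ltr0n.
Qed.

End MetricOpen.

Section SigmaLemmas.
Context {R : realType} {T : metricType R}.
Local Notation S := (@Sigma0 T).

Lemma oone_le : ole oone oone. Proof. exact: ole_refl. Qed.

Lemma S_open t (A : set T) : ole oone t -> open A -> S t A.
Proof.
move=> H oA; case: (one_case H) => Ht; first exact: Sigma0_open.
apply: (Sigma0_union (B := fun k => inner A k.+1%:R^-1)) => //.
  move=> n; exists oone; split; first exact: oone_le.
  split => //; apply: Sigma0_open; first by split; apply: ole_refl.
  exact: inner_Copen.
exact: open_bigcup_inner.
Qed.

Lemma S_set0 t : ole oone t -> S t (set0 : set T).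
Proof. move=> H; apply: S_open H open0. Qed.

Lemma S_setT t : ole oone t -> S t (setT : set T).
Proof. move=> H; apply: S_open H openT. Qed.

Lemma S_inv t (A : set T) : olt oone t -> S t A ->
  exists B : nat -> set T, A = \bigcup_n B n /\
    forall n, exists s, ole oone s /\ olt s t /\ S s (~` B n).
Proof.
move=> Ht H; case: H Ht => [t' A' [H1 H2] _ Ht|t' A' B _ HB ->] .
  by case: (olt_ole_false Ht H1).
by exists B.
Qed.

Lemma S_eqoone t (A : set T) : ole t oone -> S t A -> open A.
Proof.
move=> H1 HA; case: HA H1 => // t' A' B Ht _ _ H1; by case: (olt_ole_false Ht H1).
Qed.

Lemma S_mono s t (A : set T) : ole oone s -> ole s t -> S s A -> S t A.
Proof.
move=> H1 H2 HA; have H3 := ole_trans H1 H2.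
case: HA H1 H2 => [s' A' [Hs1 Hs2] oA|s' A' B Hs HB ->] H1 H2.
  exact: S_open.
apply: (Sigma0_union (B := B)) => //; first exact: olt_ole_trans Hs H2.
move=> n; have [r [r1 [r2 r3]]] := HB n; exists r; split => //; split => //.
exact: olt_ole_trans r2 H2.
Qed.

Lemma S_Pi_lt s t (A : set T) : ole oone s -> olt s t -> S s (~` A) -> S t A.
Proof.
move=> H1 H2 HA; apply: (Sigma0_union (B := fun _ => A)).
- exact: ole_olt_trans H1 H2.
- by move=> n; exists s.
- by apply/seteqP; split => [x Ax|x [_ _ Ax]] //; exists 0%N.
Qed.

Lemma S_Sig_lt s t (A : set T) : ole oone s -> olt s t -> S s A -> S t (~` A).
Proof. move=> H1 H2 HA; apply: S_Pi_lt H1 H2 _; by rewrite setCK. Qed.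

Lemma S_bigcup t (A : nat -> set T) : ole oone t -> (forall n, S t (A n)) ->
  S t (\bigcup_n A n).
Proof.
move=> H HA; case: (one_case H) => Ht.
  apply: S_open H _; apply: bigcup_open => n _; apply: S_eqoone (HA n).
  by case: Ht.
have := fun n => S_inv Ht (HA n) => /choice [B HB].
pose C q := match unpickle q with Some (n, m) => B n m | None => set0 end.
apply: (Sigma0_union (B := C)) => //.
  move=> q; rewrite /C; case: (unpickle q) => [[n m]|].
    exact: (proj2 (HB n)).
  exists oone; split; first exact: oone_le; split => //.
  rewrite setC0; apply: S_setT; exact: oone_le.
apply/seteqP; split.
- move=> x [n _]; rewrite (proj1 (HB n)) => -[m _ Hm].
  exists (pickle (n, m)) => //; by rewrite /C pickleK.
- move=> x [q _]; rewrite /C; case: (unpickle q) => [[n m]|] // Hx.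
  exists n => //; rewrite (proj1 (HB n)); by exists m.
Qed.

Lemma S_setU t (A B : set T) : ole oone t -> S t A -> S t B -> S t (A `|` B).
Proof.
move=> H HA HB.
have -> : A `|` B = \bigcup_n (if n is 0%N then A else B).
  apply/seteqP; split => [x [Ax|Bx]|x [[|n] _ Hx]]; [by exists 0%N|by exists 1%N|by left|by right].
apply: S_bigcup H _ => -[|n] //.
Qed.

Lemma olt_max a b t : olt a t -> olt b t -> ole oone a -> ole oone b ->
  exists c, [/\ ole a c, ole b c, olt c t & ole oone c].
Proof.
move=> Ha Hb H1 H2; case: (ole_total a b) => H.
  by exists b; split => //; apply: ole_refl.
exists a; split => //; [exact: ole_refl | exact: olt_ole H].
Qed.

Lemma S_setI t (A B : set T) : ole oone t -> S t A -> S t B -> S t (A `&` B).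
Proof.
move=> H HA HB; case: (one_case H) => Ht.
  apply: S_open H _; apply: openI; [apply: S_eqoone HA|apply: S_eqoone HB]; by case: Ht.
have [C [-> HC]] := S_inv Ht HA; have [D [-> HD]] := S_inv Ht HB.
have -> : \bigcup_n C n `&` \bigcup_n D n = \bigcup_n \bigcup_m (C n `&` D m).
  apply/seteqP; split => [x [[n _ Cn] [m _ Dm]]|x [n _ [m _ [Cn Dm]]]].
    by exists n => //; exists m.
  by split; [exists n|exists m].
apply: (S_bigcup H) => n; apply: (S_bigcup H) => m.
have [a [a1 [a2 a3]]] := HC n; have [b [b1 [b2 b3]]] := HD m.
have [c [c1 c2 c3 c4]] := olt_max a2 b2 a1 b1.
apply: (S_Pi_lt c4 c3); rewrite setCI.
apply: (S_setU c4); [exact: S_mono a1 c1 a3|exact: S_mono b1 c2 b3].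
Qed.

End SigmaLemmas.

Lemma near_oo (P : nat -> Prop) : (\forall n \near \oo, P n) <-> exists N, forall n, (N <= n)%N -> P n.
Proof. split => [[N _ H]|[N H]]; exists N => //. Qed.

Section Forward.
Context {R : realType} {X Y : metricType R}.

Lemma cvg_mdistP (u : nat -> Y) y : u @ \oo --> y <->
  forall e : R, 0 < e -> exists N, forall n, (N <= n)%N -> mdist y (u n) < e.
Proof.
rewrite cvg_ballP; split => H e e0; have := H e e0.
- by move/near_oo => [N HN]; exists N => n Hn; have := HN n Hn; rewrite ballEmdist.
- by move=> [N HN]; apply/near_oo; exists N => n Hn; rewrite ballEmdist; exact: HN.
Qed.

Definition meas t (f : X -> Y) := forall U, open U -> Sigma0 t (f @^-1` U).

Lemma BaireClass_ind' (P : cord -> (X -> Y) -> Prop) :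
  (forall t f, oeq t oone -> (forall U : set Y, open U -> Sigma0 (OS oone) (f @^-1` U)) -> P t f) ->
  (forall t f (g : nat -> X -> Y), olt oone t ->
     (forall n, exists s, ole oone s /\ olt s t /\ BaireClass s (g n) /\ P s (g n)) ->
     (forall x, (fun n => g n x) @ \oo --> f x) -> P t f) ->
  forall t f, BaireClass t f -> P t f.
Proof.
move=> H1 H2; fix IH 3 => t f H; case: H => [t' f' Ht Hf|t' f' g Ht Hg Hc].
  exact: H1.
apply: (H2 _ _ g) => // n; case: (Hg n) => s [h1 [h2 h3]].
exists s; split => //; split => //; split => //; exact: IH.
Qed.

Lemma BaireClass_ge1 t (f : X -> Y) : BaireClass t f -> ole oone t.
Proof. case => [t' f' [_ H] _|t' f' g H _ _]; [exact: H|exact: olt_ole]. Qed.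

Lemma meas_lim t (f : X -> Y) (g : nat -> X -> Y) (s : nat -> cord) :
  ole oone t ->
  (forall n, ole oone (s n) /\ olt (s n) t /\ meas (OS (s n)) (g n)) ->
  (forall x, (fun n => g n x) @ \oo --> f x) -> meas (OS t) f.
Proof.
move=> Ht Hg Hc U oU.
have HOt : ole oone (OS t) by apply: ole_trans Ht (ole_S t).
have -> : f @^-1` U = \bigcup_k \bigcup_N \bigcap_n
    (if (N <= n)%N then g n @^-1` inner U k.+1%:R^-1 else setT).
  have kpos : forall k : nat, 0 < k.+1%:R^-1 :> R by move=> k; rewrite invr_gt0 ltr0Sn.
  apply/seteqP; split.
  - move=> x /= Ux; have [e e0 He] := (proj1 (open_mdistP U)) oU _ Ux.
    have [k Hk] := inv_small (divr_gt0 e0 (ltr0n R 2)).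
    have [N HN] := (proj1 (cvg_mdistP _ _)) (Hc x) _ (kpos k).
    exists k => //; exists N => // n _; case: ifP => // Nn z Hz; apply: He.
    rewrite (le_lt_trans (mdist_tri _ (g n x) _)) //.
    rewrite [e]splitr; apply: ltrD; last exact: lt_trans Hz Hk.
    exact: lt_trans (HN n Nn) Hk.
  - move=> x [k _ [N _ Hx]] /=.
    have [M HM] := (proj1 (cvg_mdistP _ _)) (Hc x) _ (kpos k).
    have := Hx (maxn N M) I; rewrite leq_maxl /= => H; apply: H.
    by rewrite mdist_sym'; apply: HM; rewrite leq_maxr.
apply: (S_bigcup HOt) => k; apply: (S_bigcup HOt) => N.
apply: (S_Pi_lt Ht (olt_ole_trans (ole_refl (OS t)) (ole_refl _))).
rewrite setC_bigcap; apply: (S_bigcup Ht) => n; case: ifP => _; last first.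
  by rewrite setCT; apply: S_set0.
have [h1 [h2 h3]] := Hg n.
apply: (S_mono (s := OS (s n))) => //; first exact: ole_trans h1 (ole_S _).
rewrite preimage_setC; apply: h3; exact: inner_Copen.
Qed.

Lemma Baire_meas t (f : X -> Y) : BaireClass t f -> meas (OS t) f.
Proof.
move=> H; elim/BaireClass_ind': H => [t' f' [H1 H2] Hf|t' f' g Ht Hg Hc].
  move=> U oU; apply: (S_mono (s := OS oone)) (Hf U oU).
    apply: ole_S.
  exact: ole_SS.
have /choice [s Hs] : forall n, exists s, ole oone s /\ olt s t' /\ meas (OS s) (g n).
  move=> n; have [s [h1 [h2 [_ h4]]]] := Hg n; by exists s.
exact: (meas_lim (olt_ole Ht) Hs).
Qed.

End Forward.

Lemma inv_nat_le {R : realType} (n N : nat) : (N <= n)%N -> n.+1%:R^-1 <= N.+1%:R^-1 :> R.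
Proof. move=> H; rewrite lef_pV2 ?posrealE ?ler_nat // ?qualifE /= ltr0Sn //. Qed.

Lemma inv_nat_gt0 {R : realType} (k : nat) : 0 < k.+1%:R^-1 :> R.
Proof. by rewrite invr_gt0 ltr0Sn. Qed.

Section Approx.
Context {R : realType} {X Y : metricType R}.

Definition mball (y : Y) (r : R) := [set z | mdist y z < r].

Lemma mball_open y r : open (mball y r).
Proof.
apply/open_mdistP => z /= Hz; exists (r - mdist y z); first by rewrite subr_gt0.
move=> z' Hz'; rewrite /mball /= (le_lt_trans (mdist_tri y z z')) //.
by rewrite addrC -ltrBrDr.
Qed.

Lemma sep_seq : separable_space Y -> Y ->
  exists e : nat -> Y, forall y (r : R), 0 < r -> exists i, mdist y (e i) < r.
Proof.
move=> [D [cD dD]] y0.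
have [h hinj] := (elimT (countable_injP D)) cD.
have /choice [e He] : forall n : nat, exists y : Y,
    (D y /\ h y = n) \/ (~ (exists y', D y' /\ h y' = n) /\ y = y0).
  move=> n; case: (EM (exists y', D y' /\ h y' = n)) => [[y' Hy']|Hn].
    by exists y'; left.
  by exists y0; right.
exists e => y r r0.
have [z [Hz Dz]] : mball y r `&` D !=set0.
  apply: dD; last exact: mball_open.
  by exists y; rewrite /mball /= mdistxx.
exists (h z); case: (He (h z)) => [[De Hh]|[Hn _]]; last first.
  by exfalso; apply: Hn; exists z.
have -> : e (h z) = z by apply: hinj; rewrite ?inE.
exact: Hz.
Qed.

Lemma approx t (f : X -> Y) (e : nat -> Y) (r : R) :
  ole oone t -> 0 < r ->
  (forall y (r : R), 0 < r -> exists i, mdist y (e i) < r) ->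
  meas (OS t) f ->
  exists F : X -> Y, Delta0_fun (OS t) F /\ forall x, mdist (f x) (F x) < r.
Proof.
move=> Ht r0 He Hf.
have HSt : olt oone (OS t) by apply: ole_SS.
have HOt : ole oone (OS t) by apply: olt_ole.
have /choice [B HB] := fun i => S_inv HSt (Hf _ (mball_open (e i) r)).
pose Q q := match unpickle q with Some (i, m) => B i m | None => set0 end.
pose idx (q : nat) : nat := match (unpickle q : option (nat * nat)) with Some (i, m) => i | None => 0%N end.
have HQ1 : forall q x, Q q x -> mdist (e (idx q)) (f x) < r.
  move=> q x; rewrite /Q /idx; case: (unpickle q) => [[i m]|] // Hx.
  have : (f @^-1` mball (e i) r) x by rewrite (proj1 (HB i)); exists m.
  done.
have HQ2 : forall q, Sigma0 t (~` Q q).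
  move=> q; rewrite /Q; case: (unpickle q) => [[i m]|]; last first.
    by rewrite setC0; apply: S_setT.
  have [s [s1 [s2 s3]]] := (proj2 (HB i)) m.
  exact: S_mono s1 (ole_SS_inv s2) s3.
have cov : forall x, exists q, `[< Q q x >].
  move=> x; have [i Hi] := He (f x) r r0.
  have : (f @^-1` mball (e i) r) x by rewrite /mball /= mdist_sym'.
  rewrite (proj1 (HB i)) => -[m _ Hm]; exists (pickle (i, m)).
  by apply/asboolP; rewrite /Q pickleK.
pose qm x := ex_minn (cov x).
exists (fun x => e (idx (qm x))); split; last first.
  move=> x; rewrite mdist_sym'; apply: HQ1.
  by rewrite /qm; case: ex_minnP => q /asboolP.
move=> A _.
pose L q := Q q `&` [set x | forall j, (j < q)%N -> ~ Q j x].
have HL : forall x q, L q x <-> qm x = q.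
  move=> x q; rewrite /qm; case: ex_minnP => m /asboolP Hm Hmin; split.
  - move=> [Hq Hj]; apply/eqP; rewrite eqn_leq Hmin; last by apply/asboolP.
    by rewrite leqNgt; apply/negP => /Hj.
  - move=> <-; split => // j Hj Qj.
    by have := Hmin j (introT (asboolP _) Qj); rewrite leqNgt Hj.
have -> : (fun x => e (idx (qm x))) @^-1` A =
    \bigcup_q (if `[< A (e (idx q)) >] then L q else set0).
  apply/seteqP; split => [x /= Ax|x [q _]].
    exists (qm x) => //; case: ifPn => [_|/asboolPn //]; exact/HL.
  case: ifPn => [/asboolP HA Lq|//]; rewrite /= (proj1 (HL x q) Lq); exact: HA.
apply: (S_bigcup HOt) => q; case: ifP => _; last exact: S_set0.
have Hfin : forall q, Sigma0 t [set x | forall j, (j < q)%N -> ~ Q j x].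
  elim => [|p IH].
    have -> : [set x | forall j, (j < 0)%N -> ~ Q j x] = setT.
      by apply/seteqP; split.
    exact: S_setT.
  have -> : [set x | forall j, (j < p.+1)%N -> ~ Q j x] =
      [set x | forall j, (j < p)%N -> ~ Q j x] `&` ~` Q p.
    apply/seteqP; split => [x Hx|x [Hx Hq] j]; first split.
    - by move=> j Hj; apply: Hx; rewrite ltnS ltnW.
    - by apply: Hx.
    rewrite ltnS leq_eqVlt => /orP [/eqP ->|Hj] //; exact: Hx.
  exact: S_setI.
apply: (S_setI HOt).
  exact: (S_Pi_lt Ht (ole_refl _)).
exact: S_mono Ht (ole_S t) (Hfin q).
Qed.

Lemma forward t (f : X -> Y) : separable_space Y -> BaireClass t f ->
  exists F : nat -> X -> Y, (forall n, Delta0_fun (OS t) (F n)) /\ unif_limit F f.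
Proof.
move=> sY Hb; have Ht := BaireClass_ge1 Hb; have Hm := Baire_meas Hb.
case: (EM (exists x : X, True)) => [[x0 _]|Hn]; last first.
  exists (fun _ => f); split; last by move=> e e0; exists 0%N => n _ x; exfalso; apply: Hn; exists x.
  move=> n A _; have -> : f @^-1` A = set0.
    by apply/seteqP; split => x //; exfalso; apply: Hn; exists x.
  apply: S_set0; exact: ole_trans Ht (ole_S t).
have [e He] := sep_seq sY (f x0).
have /choice [F HF] : forall n : nat, exists F : X -> Y,
    Delta0_fun (OS t) F /\ forall x, mdist (f x) (F x) < n.+1%:R^-1.
  move=> n; exact: approx Ht (inv_nat_gt0 n) He Hm.
exists F; split; first by move=> n; exact: (proj1 (HF n)).
move=> r r0; have [N HN] := inv_small r0; exists N => n Hn x.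
apply: (lt_le_trans ((proj2 (HF n)) x)); apply: (le_trans (inv_nat_le Hn)).
exact: ltW.
Qed.

End Approx.

Section Back1.
Context {R : realType} {X Y : metricType R}.

Lemma unif_meas t (f : X -> Y) (F : nat -> X -> Y) : ole oone t ->
  (forall n, Delta0_fun (OS t) (F n)) -> unif_limit F f -> meas (OS t) f.
Proof.
move=> Ht HF Hu U oU.
have HOt : ole oone (OS t) by apply: ole_trans Ht (ole_S t).
have /choice [N HN] := fun k : nat => Hu _ (inv_nat_gt0 k).
pose r (k : nat) : R := k.+1%:R^-1.
pose W k := [set z : Y | exists y, mdist y z < r k /\ inner U (3 * r k) y].
have oW : forall k, open (W k).
  move=> k; apply/open_mdistP => z [y [Hy Hi]].
  exists (r k - mdist y z); first by rewrite subr_gt0.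
  move=> z' Hz'; exists y; split => //.
  rewrite (le_lt_trans (mdist_tri y z z')) //.
  by rewrite addrC -ltrBrDr.
have -> : f @^-1` U = \bigcup_k (F (N k) @^-1` W k).
  apply/seteqP; split.
  - move=> x /= Ux; have [e e0 He] := (proj1 (open_mdistP U)) oU _ Ux.
    have [k Hk] := inv_small (divr_gt0 e0 (ltr0Sn R 3)).
    exists k => //; exists (f x); split; first exact: (HN k (N k) (leqnn _) x).
    move=> z Hz; apply: He; apply: (lt_le_trans Hz).
    rewrite -/(r k) in Hk; have : 4 * r k < e.
      by rewrite mulrC -ltr_pdivlMr.
    move=> H4; apply: ltW; apply: le_lt_trans H4.
    by rewrite ler_wpM2r // ?ler_nat // ltW // inv_nat_gt0.
  - move=> x [k _ [y [Hy Hi]]] /=; apply: Hi.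
    rewrite (le_lt_trans (mdist_tri y (F (N k) x) (f x))) //.
    have H1 := HN k (N k) (leqnn _) x; rewrite mdist_sym' in H1.
    have : r k + r k < 3 * r k.
      have rk0 : 0 < r k := inv_nat_gt0 k.
      by rewrite -mulr2n -[r k *+ 2]mulr_natl ltr_pM2r // ltr_nat.
    apply: le_lt_trans; apply: ltW; exact: ltrD.
apply: (S_bigcup HOt) => k; apply: (HF (N k)); exact: S_open HOt (oW k).
Qed.

End Back1.

Fixpoint fsearch (p : pred nat) (i fuel : nat) : option nat :=
  match fuel with
  | 0 => None
  | S f => if p i then Some i else fsearch p i.+1 f
  end.

Definition firstq (p : pred nat) (n : nat) := fsearch p 0 n.+1.

Lemma fsearch_sound (p : pred nat) fuel i q : fsearch p i fuel = Some q -> p q.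
Proof.
elim: fuel i => [|f IH] i //=; case: ifP => [Hp [<-] //|_]; exact: IH.
Qed.

Lemma firstq_sound (p : pred nat) n q : firstq p n = Some q -> p q.
Proof. exact: fsearch_sound. Qed.

Lemma fsearch_exact (p : pred nat) fuel i q : (i <= q)%N -> (q < i + fuel)%N -> p q ->
  (forall j, (i <= j)%N -> (j < q)%N -> ~~ p j) -> fsearch p i fuel = Some q.
Proof.
elim: fuel i => [|f IH] i Hi Hq Hp Hj; first by rewrite addn0 ltnNge Hi in Hq.
rewrite /=; case: ifP => Hpi.
  case: (ltngtP i q) Hi => // [Hiq|<-] _ //.
  by have := Hj i (leqnn i) Hiq; rewrite Hpi.
have Hiq : (i < q)%N.
  by rewrite ltn_neqAle Hi andbT; apply/eqP => E; rewrite E Hp in Hpi.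
apply: IH => //; first by rewrite addSnnS.
by move=> j Hij; apply: Hj; apply: ltnW.
Qed.

Lemma firstq_exact (p : pred nat) n q : (q <= n)%N -> p q -> (forall j, (j < q)%N -> ~~ p j) ->
  firstq p n = Some q.
Proof.
move=> Hq Hp Hj; apply: fsearch_exact => //.
by move=> j _; apply: Hj.
Qed.

Definition minq (p : pred nat) : nat :=
  match pselect (exists n, p n) with
  | left H => ex_minn H
  | right _ => 0%N
  end.

Lemma minqP (p : pred nat) : (exists n, p n) ->
  p (minq p) /\ forall n, p n -> (minq p <= n)%N.
Proof.
move=> H; rewrite /minq; case: pselect => // H'.
by case: ex_minnP => m Hm Hmin; split.
Qed.

Lemma eventually_fin (P : nat -> nat -> Prop) M :
  (forall q, (q < M)%N -> exists N, forall n, (N <= n)%N -> P n q) ->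
  exists N, forall n, (N <= n)%N -> forall q, (q < M)%N -> P n q.
Proof.
elim: M => [|M IH] H; first by exists 0%N.
have [N1 H1] := IH (fun q Hq => H q (ltnW Hq)).
have [N2 H2] := H M (ltnSn M).
exists (maxn N1 N2) => n Hn q; rewrite ltnS leq_eqVlt => /orP [/eqP ->|Hq].
  by apply: H2; apply: leq_trans Hn; rewrite leq_maxr.
by apply: H1 => //; apply: leq_trans Hn; rewrite leq_maxl.
Qed.

Section Chain.
Context {R : realType} {Y : metricType R}.
Variables (y : nat -> nat -> Y) (y0 : Y) (cond : nat -> nat -> nat -> bool).

Fixpoint lev (o : nat -> nat -> bool) (n k : nat) : option nat :=
  match k with
  | 0 => firstq (fun q => o 0%N q && true) n
  | S k' => match lev o n k' with
            | Some q => firstq (fun q' => o k q' && cond k' q q') n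
            | None => None
            end
  end.

Fixpoint cval (o : nat -> nat -> bool) (n k : nat) : Y :=
  match k with
  | 0 => match lev o n 0 with Some q => y 0 q | None => y0 end
  | S k' => match lev o n k with Some q => y k q | None => cval o n k' end
  end.

Lemma val_some o n k q : lev o n k = Some q -> cval o n k = y k q.
Proof. by case: k => [|k] /= ->. Qed.

Lemma lev_prev o n k q' : lev o n k.+1 = Some q' ->
  exists q, lev o n k = Some q /\ cond k q q'.
Proof.
rewrite /=; case: (lev o n k) => // q H; exists q; split => //.
by have /andP [] := firstq_sound H.
Qed.

Lemma val_none o n k : lev o n k.+1 = None -> cval o n k.+1 = cval o n k.
Proof. move=> H; change ((match lev o n k.+1 with Some q => y k.+1 q | None => cval o n k end) = cval o n k); by rewrite H. Qed.

Variable r : nat -> R.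
Hypothesis r_dec : forall k, r k.+1 <= r k.
Hypothesis Hcond : forall k q q', cond k q q' -> mdist (y k q) (y k.+1 q') <= 4 * (r k - r k.+1).

Lemma val_close o n K qK : lev o n K = Some qK -> forall m, (K <= m)%N ->
  mdist (y K qK) (cval o n m) <= 4 * (r K - r m).
Proof.
move=> HK m /subnK <-; elim: (m - K)%N => [|d IH].
  by rewrite add0n (val_some HK) mdistxx subrr mulr0.
rewrite addSn; case E: (lev o n (d + K).+1) => [q'|].
  have [q [Hq Hc]] := lev_prev E.
  rewrite (val_some E); rewrite (val_some Hq) in IH.
  apply: le_trans (mdist_tri _ (y (d + K) q) _) _.
  have -> : 4 * (r K - r (d + K).+1) = 4 * (r K - r (d + K)) + 4 * (r (d + K) - r (d + K).+1).
    by rewrite -mulrDr addrA subrK.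
  exact: lerD IH (Hcond Hc).
rewrite (val_none E); apply: le_trans IH _.
by rewrite ler_pM2l // lerB.
Qed.

Variables (Pm : nat -> nat -> Prop) (o : nat -> nat -> nat -> bool).
Hypothesis Hin : forall n k q, (k <= n)%N -> (q <= n)%N -> Pm k q -> o n k q.
Hypothesis Hout : forall k q, ~ Pm k q -> exists N, forall n, (N <= n)%N -> ~~ o n k q.
Hypothesis Hex : forall k, exists q, Pm k q.
Hypothesis Hconsist : forall k q q', Pm k q -> Pm k.+1 q' -> cond k q q'.

Fixpoint tq (k : nat) : nat :=
  match k with
  | 0 => minq (fun q => `[< Pm 0%N q >] && true)
  | S k' => minq (fun q => `[< Pm k q >] && cond k' (tq k') q)
  end.

Lemma tq_spec k : Pm k (tq k) /\
  (forall q, Pm k q -> (match k with 0 => true | S k' => cond k' (tq k') q end) ->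
     (tq k <= q)%N).
Proof.
elim: k => [|k [IH1 IH2]].
  have [q Hq] := Hex 0%N.
  have Hq' : `[< Pm 0%N q >] && true by rewrite andbT; exact/asboolP.
  have [/andP [/asboolP H1 _] H2] := minqP (p := fun q => `[< Pm 0%N q >] && true) (ex_intro _ q Hq').
  split => // q1 Pq _; apply: H2; apply/andP; split => //; exact/asboolP.
have [q Hq] := Hex k.+1.
have Hq' : `[< Pm k.+1 q >] && cond k (tq k) q.
  apply/andP; split; first exact/asboolP.
  exact: Hconsist.
have [/andP [/asboolP H1 _] H2] := minqP (p := fun q => `[< Pm k.+1 q >] && cond k (tq k) q) (ex_intro _ q Hq').
split => // q1 Pq' Hc; apply: H2; apply/andP; split => //; exact/asboolP.
Qed.

Lemma tq_cond k : cond k (tq k) (tq k.+1).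
Proof.
have [q Hq] := Hex k.+1.
have Hq' : `[< Pm k.+1 q >] && cond k (tq k) q.
  apply/andP; split; first exact/asboolP.
  exact: Hconsist (proj1 (tq_spec k)) Hq.
by have [/andP [_ H] _] := minqP (p := fun q => `[< Pm k.+1 q >] && cond k (tq k) q) (ex_intro _ q Hq').
Qed.

Lemma lev_eventually K : exists N, forall n, (N <= n)%N -> lev (o n) n K = Some (tq K).
Proof.
pose c (k : nat) := match k with 0 => (fun _ : nat => true) | S k' => cond k' (tq k') end.
have key : forall k, exists N, forall n, (N <= n)%N ->
    firstq (fun q => o n k q && c k q) n = Some (tq k).
  move=> k.
  have H : forall q, (q < tq k)%N -> exists N, forall n, (N <= n)%N -> ~~ (o n k q && c k q).
    move=> q Hq; case: (EM (Pm k q)) => HP.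
      exists 0%N => n _; apply/negP => /andP [_ Hc].
      have := (proj2 (tq_spec k)) q HP; rewrite /c in Hc; case: k Hq Hc HP => [|k] Hq Hc HP.
        by move=> /(_ isT); rewrite leqNgt Hq.
      by move=> /(_ Hc); rewrite leqNgt Hq.
    have [N HN] := Hout HP; exists N => n Hn; by rewrite negb_and HN.
  have [N HN] := eventually_fin H.
  exists (maxn N (maxn k (tq k))) => n Hn.
  have Hn1 : (N <= n)%N by apply: leq_trans Hn; rewrite leq_maxl.
  have Hn2 : (k <= n)%N by apply: leq_trans Hn; rewrite (leq_trans _ (leq_maxr _ _)) // leq_maxl.
  have Hn3 : (tq k <= n)%N by apply: leq_trans Hn; rewrite (leq_trans _ (leq_maxr _ _)) // leq_maxr.
  apply: firstq_exact => //; last by move=> j Hj; apply: HN.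
  apply/andP; split; first exact: Hin (proj1 (tq_spec k)).
  by case: k {H HN Hn Hn2 Hn3} => [|k] //; exact: tq_cond.
elim: K => [|K [N1 H1]].
  have [N HN] := key 0%N; exists N => n Hn; exact: HN.
have [N2 H2] := key K.+1; exists (maxn N1 N2) => n Hn /=.
rewrite H1; last by apply: leq_trans Hn; rewrite leq_maxl.
exact: H2 (leq_trans (leq_maxr _ _) Hn).
Qed.

End Chain.

Section Aux.
Context {R : realType} {T : metricType R}.
Local Notation S := (@Sigma0 T).

Lemma Pi_dec_aux xi rho (A : set T) : ole oone rho -> ole rho xi -> olt oone xi ->
  S rho A -> exists Cc : (nat -> set T) * (nat -> cord),
   (forall j, ole oone (Cc.2 j) /\ olt (Cc.2 j) xi /\ S (Cc.2 j) (Cc.1 j)) /\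
   ~` A = \bigcap_j Cc.1 j.
Proof.
move=> H1 H2 H3 HA; case: HA H1 H2 => [t B Ht oB|t B D Ht HD ->] H1 H2.
  pose U (k : nat) := [set x | exists z, ~ B z /\ mdist z x < k.+1%:R^-1].
  exists (U, fun _ => oone); split.
    move=> j; split; first exact: ole_refl; split => //.
    apply: Sigma0_open; first by split; apply: ole_refl.
    apply/open_mdistP => x [z [Bz Hz]].
    exists (j.+1%:R^-1 - mdist z x); first by rewrite subr_gt0.
    move=> x' Hx'; exists z; split => //.
    rewrite (le_lt_trans (mdist_tri z x x')) //.
    by rewrite addrC -ltrBrDr.
  apply/seteqP; split => [x Bx k _|x Hx Bx].
    by exists x; split => //; rewrite mdistxx invr_gt0 ltr0Sn.
  have [e e0 He] := (proj1 (open_mdistP B)) oB x Bx.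
  have [k Hk] := inv_small e0.
  have [z [Bz Hz]] := Hx k I; apply: Bz; apply: He.
  by rewrite mdist_sym'; exact: lt_trans Hz Hk.
have /choice [c Hc] := HD.
exists (fun j => ~` D j, c); split.
  move=> j; have [c1 [c2 c3]] := Hc j; split => //; split => //.
  exact: olt_ole_trans c2 H2.
by rewrite setC_bigcup.
Qed.

Lemma Pi_dec xi rho (P : set T) : ole oone rho -> ole rho xi -> olt oone xi ->
  S rho (~` P) -> exists Cc : (nat -> set T) * (nat -> cord),
   (forall j, ole oone (Cc.2 j) /\ olt (Cc.2 j) xi /\ S (Cc.2 j) (Cc.1 j)) /\
   P = \bigcap_j Cc.1 j.
Proof.
move=> H1 H2 H3 HP; have [Cc [HC E]] := Pi_dec_aux H1 H2 H3 HP.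
by exists Cc; split => //; rewrite -E setCK.
Qed.

Definition Dl t (A : set T) := S t A /\ S t (~` A).

Lemma Dl_setI t A B : ole oone t -> Dl t A -> Dl t B -> Dl t (A `&` B).
Proof.
move=> H [HA1 HA2] [HB1 HB2]; split; first exact: S_setI.
by rewrite setCI; apply: S_setU.
Qed.

Lemma Dl_setU t A B : ole oone t -> Dl t A -> Dl t B -> Dl t (A `|` B).
Proof.
move=> H [HA1 HA2] [HB1 HB2]; split; first exact: S_setU.
by rewrite setCU; apply: S_setI.
Qed.

Lemma Dl_setC t A : Dl t A -> Dl t (~` A).
Proof. by move=> [H1 H2]; split => //; rewrite setCK. Qed.

Lemma sat t (l : list (set T)) (W : set T) : ole oone t ->
  (forall B, List.In B l -> Dl t B) ->
  (forall x x', (forall B, List.In B l -> (B x <-> B x')) -> W x -> W x') ->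
  Dl t W.
Proof.
move=> Ht; elim: l W => [|B l IH] W Hl HW.
  case: (EM (exists x, W x)) => [[x Wx]|Hn].
    have -> : W = setT.
      apply/seteqP; split => // x' _; apply: HW Wx => B [].
    by split; [apply: S_setT|rewrite setCT; apply: S_set0].
  have -> : W = set0 by apply/seteqP; split => // x Wx; apply: Hn; exists x.
  by split; [apply: S_set0|rewrite setC0; apply: S_setT].
pose same x x' := forall B', List.In B' l -> (B' x <-> B' x').
pose W1 := [set x | exists x', B x' /\ W x' /\ same x x'].
pose W2 := [set x | exists x', ~ B x' /\ W x' /\ same x x'].
have sat1 : forall V : set T, (forall x x', same x x' -> V x -> V x') ->
    forall x x', same x x' -> [set x | exists x', V x' /\ same x x'] x ->
      [set x | exists x', V x' /\ same x x'] x'.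
  move=> V _ x x' Hs [z [Vz Hz]]; exists z; split => // B' HB'.
  by rewrite -(Hz B' HB') (Hs B' HB').
have -> : W = (B `&` W1) `|` (~` B `&` W2).
  apply/seteqP; split => [x Wx|x [[Bx [z [Bz [Wz Hz]]]]|[Bx [z [Bz [Wz Hz]]]]]].
  - case: (EM (B x)) => Bx; [left|right]; split => //; exists x; by split.
  - apply: HW Wz => B' [<-|HB']; first by split.
    by split => H; apply/(Hz B' HB').
  - apply: HW Wz => B' [<-|HB']; first by split => H; exfalso; auto.
    by split => H; apply/(Hz B' HB').
have HB := Hl B (or_introl erefl).
have Hl' : forall B', List.In B' l -> Dl t B' by move=> B' H; apply: Hl; right.
apply: (Dl_setU Ht); apply: (Dl_setI Ht) => //; try exact: (Dl_setC HB).
- apply: (IH _ Hl') => x x' Hs [z [Bz [Wz Hz]]]; exists z; split => //; split => //.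
  by move=> B' HB'; rewrite -(Hz B' HB') (Hs B' HB').
- apply: (IH _ Hl') => x x' Hs [z [Bz [Wz Hz]]]; exists z; split => //; split => //.
  by move=> B' HB'; rewrite -(Hz B' HB') (Hs B' HB').
Qed.

Lemma S_finI t (C : nat -> set T) n : ole oone t ->
  (forall j, (j <= n)%N -> S t (C j)) -> S t [set x | forall j, (j <= n)%N -> C j x].
Proof.
move=> Ht; elim: n => [|n IH] HC.
  have -> : [set x | forall j, (j <= 0)%N -> C j x] = C 0%N.
    apply/seteqP; split => [x Hx|x Hx j]; first exact: Hx.
    by rewrite leqn0 => /eqP ->.
  exact: HC.
have -> : [set x | forall j, (j <= n.+1)%N -> C j x] =
    [set x | forall j, (j <= n)%N -> C j x] `&` C n.+1.
  apply/seteqP; split => [x Hx|x [Hx Hn] j]; first split.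
  - by move=> j Hj; apply: Hx; rewrite (leq_trans Hj).
  - exact: Hx.
  rewrite leq_eqVlt => /orP [/eqP ->|Hj] //; exact: Hx.
apply: (S_setI Ht); last exact: HC.
by apply: IH => j Hj; apply: HC; rewrite (leq_trans Hj).
Qed.

End Aux.

Lemma boundl xi (l : list cord) : olt oone xi ->
  (forall a, List.In a l -> ole oone a /\ olt a xi) ->
  exists s, ole oone s /\ olt s xi /\ forall a, List.In a l -> ole a s.
Proof.
move=> Hxi; elim: l => [|a l IH] H.
  by exists oone; split; [apply: ole_refl|split].
have [s [s1 [s2 s3]]] := IH (fun b Hb => H b (or_intror Hb)).
have [a1 a2] := H a (or_introl erefl).
have [c [c1 c2 c3 c4]] := olt_max a2 s2 a1 s1.
exists c; split => //; split => // b [<-|Hb] //.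
exact: ole_trans (s3 b Hb) c2.
Qed.


Section RR.
Context {R : realType}.
Definition rr (k : nat) : R := (2%:R ^+ k)^-1.
Lemma rr_gt0 k : 0 < rr k. Proof. by rewrite invr_gt0 exprn_gt0. Qed.
Lemma rr_S k : rr k.+1 = rr k / 2. Proof. by rewrite /rr exprS invfM mulrC. Qed.
Lemma rr_dec k : rr k.+1 <= rr k. Proof. have := rr_gt0 k; rewrite rr_S; lra. Qed.
Lemma rr_fact k : rr k + rr k.+1 <= 4 * (rr k - rr k.+1).
Proof. have := rr_gt0 k; rewrite rr_S; lra. Qed.
Lemma rr_small (e : R) : 0 < e -> exists K, 5 * rr K < e.
Proof.
move=> e0; have e5 : 0 < e / 5 by rewrite divr_gt0.
have [K HK] := @inv_small R _ e5; exists K.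
have H : rr K <= K.+1%:R^-1.
  rewrite /rr -natrX lef_pV2.
  - by rewrite ler_nat ltn_expl.
  - by rewrite posrE ltr0n expn_gt0.
  - by rewrite posrE ltr0n.
have : rr K < e / 5 by apply: le_lt_trans H HK.
by rewrite ltr_pdivlMr // mulrC.
Qed.
End RR.

Lemma in_seq_le k n : (k <= n)%N -> List.In k (List.seq 0 n.+1).
Proof. move/ssrnat.leP => H; apply/List.in_seq; lia. Qed.

Lemma in_seq_le' k n : List.In k (List.seq 0 n.+1) -> (k <= n)%N.
Proof. move/List.in_seq => H; apply/ssrnat.leP; lia. Qed.

Section Step.
Context {R : realType} {X Y : metricType R}.

Lemma step xi (f : X -> Y) (e : nat -> Y) :
  olt oone xi ->
  (forall y (r : R), 0 < r -> exists i, mdist y (e i) < r) ->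
  meas (OS xi) f ->
  (forall s (g : X -> Y), ole oone s -> olt s xi -> meas (OS s) g -> BaireClass s g) ->
  BaireClass xi f.
Proof.
move=> Hxi He Hf IH.
have Hxi1 : ole oone xi := olt_ole Hxi.
have HSt : olt oone (OS xi) by apply: ole_SS.
pose r := @rr R.
have /choice [B HB] := fun ki : nat * nat => S_inv HSt (Hf _ (mball_open (e ki.2) (r ki.1))).
pose Pset k (q : nat) := match (unpickle q : option (nat * nat)) with Some (i, m) => B (k, i) m | None => set0 end.
pose yv (k q : nat) := e (match (unpickle q : option (nat * nat)) with Some (i, _) => i | None => 0%N end).
have P1 : forall k q x, Pset k q x -> mdist (yv k q) (f x) < r k.
  move=> k q x; rewrite /Pset /yv; case: (unpickle q) => [[i m]|] // Hx.
  have : (f @^-1` mball (e i) (r k)) x by rewrite (proj1 (HB (k, i))); exists m.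
  done.
have P2 : forall x k, exists q, Pset k q x.
  move=> x k; have [i Hi] := He (f x) (r k) (rr_gt0 k).
  have : (f @^-1` mball (e i) (r k)) x by rewrite /mball /= mdist_sym'.
  rewrite (proj1 (HB (k, i))) => -[m _ Hm]; exists (pickle (i, m)).
  by rewrite /Pset pickleK.
have P3 : forall kq : nat * nat, exists Cc : (nat -> set X) * (nat -> cord),
   (forall j, ole oone (Cc.2 j) /\ olt (Cc.2 j) xi /\ Sigma0 (Cc.2 j) (Cc.1 j)) /\
   Pset kq.1 kq.2 = \bigcap_j Cc.1 j.
  move=> [k q]; rewrite /Pset /=; case: (unpickle q) => [[i m]|].
    have [s [s1 [s2 s3]]] := (proj2 (HB (k, i))) m.
    exact: Pi_dec s1 (ole_SS_inv s2) Hxi s3.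
  apply: (Pi_dec (rho := oone)) => //; first exact: ole_refl.
  rewrite setC0; apply: S_setT; exact: ole_refl.
have /choice [CC HCC] := P3.
pose Q n k q := [set x | forall j, (j <= n)%N -> (CC (k, q)).1 j x].
pose o n x k q := [&& (k <= n)%N, (q <= n)%N & `[< Q n k q x >]].
pose cond k q q' := mdist (yv k q) (yv k.+1 q') < r k + r k.+1.
pose g n x := cval yv (e 0%N) cond (o n x) n n.
apply: (Baire_lim (g := g)) => //.
- move=> n.
  pose lc := List.flat_map (fun k => List.flat_map (fun q => List.map (fun j => (CC (k, q)).2 j) (List.seq 0 n.+1)) (List.seq 0 n.+1)) (List.seq 0 n.+1).
  have [s [s1 [s2 s3]]] : exists s, ole oone s /\ olt s xi /\ forall a, List.In a lc -> ole a s.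
    apply: boundl Hxi _ => a /List.in_flat_map [k [_ /List.in_flat_map [q [_ /List.in_map_iff [j [<- _]]]]]].
    have [h1 [h2 _]] := (proj1 (HCC (k, q))) j; by split.
  exists s; split => //; split => //.
  have HQ : forall k q, (k <= n)%N -> (q <= n)%N -> Sigma0 s (Q n k q).
    move=> k q Hk Hq; rewrite /Q; apply: S_finI; first exact: s1; move=> j Hj.
    have [h1 [h2 h3]] := (proj1 (HCC (k, q))) j.
    apply: (S_mono h1) h3; apply: s3.
    apply/List.in_flat_map; exists k; split; first exact: in_seq_le.
    apply/List.in_flat_map; exists q; split; first exact: in_seq_le.
    apply/List.in_map_iff; exists j; split => //; exact: in_seq_le.
  apply: IH => //.
  move=> U _.
  pose lq := List.flat_map (fun k => List.map (fun q => Q n k q) (List.seq 0 n.+1)) (List.seq 0 n.+1).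
  have Hs1 : ole oone (OS s) := ole_trans s1 (ole_S s).
  suff : Dl (OS s) (g n @^-1` U) by case.
  apply: (sat (l := lq) Hs1).
  + move=> B0 /List.in_flat_map [k [Hk /List.in_map_iff [q [<- Hq]]]].
    have HQ' := HQ k q (in_seq_le' Hk) (in_seq_le' Hq).
    split; first exact: S_mono s1 (ole_S s) HQ'.
    exact: S_Sig_lt s1 (ole_refl _) HQ'.
  + move=> x x' Hsame; rewrite /preimage /= /g.
    have -> : o n x = o n x'; last by [].
    apply/funext => k; apply/funext => q; rewrite /o.
    case Hk: (k <= n)%N; case Hq: (q <= n)%N => //=.
    have HBq : List.In (Q n k q) lq.
      apply/List.in_flat_map; exists k; split; first exact: in_seq_le.
      apply/List.in_map_iff; exists q; split => //; exact: in_seq_le.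
    by rewrite (propext (Hsame _ HBq)).
- move=> x; apply/cvg_mdistP => eps eps0.
  have [K HK] := rr_small eps0.
  have Hin : forall n k q, (k <= n)%N -> (q <= n)%N -> Pset k q x -> o n x k q.
    move=> n k q Hk Hq HP; rewrite /o Hk Hq /=; apply/asboolP => j _.
    by move: HP; rewrite (proj2 (HCC (k, q))) => /(_ j I).
  have Hout : forall k q, ~ Pset k q x -> exists N, forall n, (N <= n)%N -> ~~ o n x k q.
    move=> k q; rewrite (proj2 (HCC (k, q))) => HP.
    have [j Hj] : exists j, ~ (CC (k, q)).1 j x.
      apply: contra_notP HP => H j _; apply: contra_notP H => H; by exists j.
    exists j => n Hn; rewrite /o; apply/negP => /and3P [_ _ /asboolP HQ].
    exact: Hj (HQ j Hn).
  have Hcons : forall k q q', Pset k q x -> Pset k.+1 q' x -> cond k q q'.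
    move=> k q q' H1 H2; rewrite /cond.
    apply: le_lt_trans (mdist_tri _ (f x) _) _; apply: ltrD; first exact: P1.
    by rewrite mdist_sym'; apply: P1.
  have [N HN] := lev_eventually Hin Hout (P2 x) Hcons K.
  exists (maxn N K) => n Hn.
  have HlK := HN n (leq_trans (leq_maxl _ _) Hn).
  have HKn : (K <= n)%N := leq_trans (leq_maxr _ _) Hn.
  have Hrdec : forall k, r k.+1 <= r k by move=> k; exact: rr_dec.
  have Hcond : forall k q q', cond k q q' -> mdist (yv k q) (yv k.+1 q') <= 4 * (r k - r k.+1).
    move=> k q q' Hc; apply: le_trans (ltW Hc) _; exact: rr_fact.
  have H1 := val_close (e 0%N) Hrdec Hcond HlK HKn.
  have H2 := P1 _ _ _ (proj1 (tq_spec (P2 x) Hcons K)).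
  rewrite mdist_sym' in H2; have Hrn := rr_gt0 (R := R) n.
  apply: le_lt_trans (mdist_tri (f x) (yv K (tq cond (fun k q => Pset k q x) K)) (g n x)) _.
  rewrite /g; move: H1 H2 Hrn HK; rewrite /r.
  set a := mdist _ _; set b := mdist _ _; lra.
Qed.

End Step.

Section Final.
Context {R : realType} {X Y : metricType R}.

Lemma backward xi (f : X -> Y) (e : nat -> Y) :
  (forall y (r : R), 0 < r -> exists i, mdist y (e i) < r) ->
  ole oone xi -> meas (OS xi) f -> BaireClass xi f.
Proof.
move=> He; move: f; elim/(well_founded_induction olt_wf): xi => xi IHxi f H1 Hm.
case: (one_case H1) => Ht.
  have Ht1 := proj1 Ht; apply: (Baire_one Ht) => U oU; apply: (S_mono _ _ (Hm U oU)).
    exact: ole_trans H1 (ole_S xi).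
  exact: ole_SS Ht1.
apply: (step Ht He Hm) => s g s1 s2 Hg; exact: IHxi s s2 g s1 Hg.
Qed.

Lemma empty_baire xi (f : X -> Y) : ole oone xi -> ~ (exists x : X, True) -> BaireClass xi f.
Proof.
move=> H1 Hn.
have Hpre : forall U : set Y, f @^-1` U = set0.
  by move=> U; apply/seteqP; split => x //; exfalso; apply: Hn; exists x.
have B1 : BaireClass oone f.
  apply: Baire_one; first by split; apply: ole_refl.
  move=> U _; rewrite Hpre; apply: S_set0; exact: ole_S.
case: (one_case H1) => Ht.
  apply: Baire_one Ht _ => U _; rewrite Hpre; apply: S_set0; exact: ole_S.
apply: (Baire_lim (g := fun _ => f)) => //.
  by move=> n; exists oone; split; [apply: ole_refl|split].
by move=> x; exfalso; apply: Hn; exists x.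
Qed.

End Final.

Unset Implicit Arguments.
Theorem mainTheorem3 (R : realType) (X Y : metricType R) (xi : cord)
  (f : X -> Y) :
  separable_space Y -> ole oone xi ->
  (BaireClass xi f <->
   exists F : nat -> X -> Y,
     (forall n, Delta0_fun (OS xi) (F n)) /\ unif_limit F f).
Proof.
move=> sY H1; split; first exact: forward.
move=> [F [HF Hu]].
have Hm := unif_meas H1 HF Hu.
case: (EM (exists x : X, True)) => [[x0 _]|Hn]; last exact: empty_baire.
have [e He] := sep_seq sY (f x0).
exact: backward He H1 Hm.
Qed.
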